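(* Let $N\ge2$, $n,m,p$ be positive integers, $A\in\mathbb{R}^{n\times n}$, $B\in\mathbb{R}^{n\times p}$, $C\in\mathbb{R}^{m\times n}$, $H\in\mathbb{R}^{n\times m}$, and $h>0$. Let $W=W_{circle}\in\mathbb{R}^{N\times N}$ have entries $w_{1,N}\neq0$, $w_{i,i-1}\neq0$ for $i=2,\dots,N$, and all other entries zero, and let $\Delta=\Delta_1=\mathrm{diag}(1,0,\dots,0)\in\mathbb{R}^{N\times N}$. Put $\mathcal{B}(h)=\int_0^h e^{A\tau}d\tau\,B$, $\mathcal{H}(h)=\int_0^h e^{A\tau}d\tau\,HC$, $\Phi_s=I_N\otimes e^{Ah}+W\otimes\mathcal{H}(h)$, $\Psi_s=\Delta\otimes\mathcal{B}(h)$. Let $v_1,\dots,v_N\in\mathbb{C}^{1\times N}$ be linearly independent row vectors with $v_kW=\lambda_kv_k$ ($\lambda_1,\dots,\lambda_N$ the eigenvalues of $W$), and $E_k=e^{Ah}+\lambda_k\mathcal{H}(h)$. Suppose: (2) the pair $(E_k,\mathcal{B}(h))$ is controllable for every $k=1,\dots,N$; (3) whenever $\theta\in\mathbb{C}$ is a common eigenvalue of $E_{k_1},\dots,E_{k_q}$ for distinct indices $k_1,\dots,k_q$ with $1<q\le N$, then $(v_{k_1}\otimes\xi_{k_1}+\dots+v_{k_q}\otimes\xi_{k_q})(\Delta\otimes\mathcal{B}(h))\neq0$ for all $\xi_j\in M(\theta\,|\,E_j)$, $j=k_1,\dots,k_q$, with $(\xi_{k_1},\dots,\xi_{k_q})\neq0$.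 Then the networked sampled-data system $X(k+1)=\Phi_sX(k)+\Psi_sU(k)$ is controllable.
   Context: The networked sampled-data system is the discrete-time system $X(k+1)=\Phi_sX(k)+\Psi_sU(k)$; it is called controllable if every initial state can be steered to the origin in finitely many steps. For $F\in\mathbb{C}^{q\times q}$, $G\in\mathbb{C}^{q\times s}$, the pair $(F,G)$ is called controllable if $\mathrm{rank}[sI_q-F,\ G]=q$ for every $s\in\mathbb{C}$. $M(\theta\,|\,E)=\{\xi:\ \xi E=\theta\xi\}$ is the left eigenspace of the square matrix $E$ for $\theta$. $\otimes$ is the Kronecker product. *)

(* Defs.v *)
From HB Require Import structures.
From mathcomp Require Import all_boot all_order all_algebra.
From mathcomp Require Import all_classical all_reals all_analysis.
From mathcomp Require Import mxtens complex.
Set Implicit Arguments. Unset Strict Implicit. Unset Printing Implicit Defensive.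
Import Order.TTheory GRing.Theory Num.Theory numFieldNormedType.Exports.
Local Open Scope ring_scope.

Section Defs.
Variable R : realType.

Definition expmx (n : nat) (A : 'M[R]_n) : 'M[R]_n :=
  \matrix_(i, j) limn (series (fun k : nat => (A ^+ k) i j / (k`!)%:R)).

Definition intexpmx (n : nat) (A : 'M[R]_n) (h : R) : 'M[R]_n :=
  \matrix_(i, j) Rintegral lebesgue_measure `[0, h]%classic
                   (fun tau : R => expmx (tau *: A) i j).

Fixpoint traj (q s : nat) (Phi : 'M[R]_q) (Psi : 'M[R]_(q, s))
  (X0 : 'cV[R]_q) (U : nat -> 'cV[R]_s) (k : nat) : 'cV[R]_q :=
  match k with
  | 0 => X0
  | k'.+1 => Phi *m traj Phi Psi X0 U k' + Psi *m U k'
  end.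

Definition ds_controllable (q s : nat) (Phi : 'M[R]_q) (Psi : 'M[R]_(q, s)) :=
  forall X0 : 'cV[R]_q, exists (K : nat) (U : nat -> 'cV[R]_s),
    traj Phi Psi X0 U K = 0.

Definition cmx (m n : nat) (A : 'M[R]_(m, n)) : 'M[R[i]]_(m, n) :=
  map_mx (fun x : R => real_complex R x) A.
End Defs.

Definition pair_controllable (K : fieldType) (q s : nat)
  (F : 'M[K]_q) (G : 'M[K]_(q, s)) :=
  forall z : K, \rank (row_mx (z%:M - F) G) = q.

Definition left_eig (K : fieldType) (q : nat) (theta : K) (E : 'M[K]_q)
  (xi : 'rV[K]_q) := xi *m E = theta *: xi.

(* Main.v *)
Require Import Defs.
From HB Require Import structures.
From mathcomp Require Import all_boot all_order all_algebra.
From mathcomp Require Import all_classical all_reals all_analysis.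
From mathcomp Require Import mxtens complex.
Import Order.TTheory GRing.Theory Num.Theory numFieldNormedType.Exports.
Local Open Scope ring_scope.

Section Gen.
Variable K : fieldType.

Fixpoint Sreach (q s : nat) (a : 'M[K]_q) (b : 'M[K]_(s, q)) (d : nat) : 'M[K]_q :=
  match d with
  | 0 => 0
  | d'.+1 => (b + Sreach q s a b d' *m a)%MS
  end.
Arguments Sreach {q s}.

Lemma Sreach_mono q s a b d : (@Sreach q s a b d <= Sreach a b d.+1)%MS.
Proof.
elim: d => [|d IH] /=; first exact: sub0mx.
by apply: addsmxS => //; apply: submxMr.
Qed.

Lemma Sreach_stab q s a b : exists d, (@Sreach q s a b d.+1 <= Sreach a b d)%MS.
Proof.
case: (pselect (exists d, (@Sreach q s a b d.+1 <= Sreach a b d)%MS)) => // Hn.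
have H : forall d, (d <= \rank (Sreach a b d))%N.
  elim=> [|d IH] //.
  have lt : (Sreach a b d < Sreach a b d.+1)%MS.
    rewrite ltmxE Sreach_mono /=; apply/negP => Hs; apply: Hn; by exists d.
  exact: leq_ltn_trans IH (rank_ltmx lt).
have := H q.+1; rewrite ltnNge rank_leq_col //.
Qed.

Fixpoint rtraj (q s : nat) (a : 'M[K]_q) (b : 'M[K]_(s, q)) (U : nat -> 'rV[K]_s) (k : nat) : 'rV[K]_q :=
  match k with
  | 0 => 0
  | k'.+1 => rtraj q s a b U k' *m a + U k' *m b
  end.
Arguments rtraj {q s}.

Lemma rtraj_ext q s a b U U' k : (forall j, (j < k)%N -> U j = U' j) ->
  @rtraj q s a b U k = rtraj a b U' k.
Proof.
elim: k => [|k IH] //= HU.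
rewrite IH ?HU // => j lt; apply: HU; exact: ltnW.
Qed.

Lemma reach_decomp q s a b d (x : 'rV[K]_q) : (x <= @Sreach q s a b d)%MS ->
  exists U, x = rtraj a b U d.
Proof.
elim: d x => [|d IH] x /=.
  by rewrite submx0 => /eqP ->; exists (fun _ => 0).
case/sub_addsmxP => [[u1 u2]] /= ->.
have [U' HU'] := IH (u2 *m Sreach a b d) (submxMl _ _).
exists (fun j => if j == d then u1 else U' j) => /=.
rewrite eqxx mulmxA HU' addrC; congr (_ *m _ + _).
by apply: rtraj_ext => j lt; rewrite ifN // ltn_eqF.
Qed.

End Gen.
Arguments Sreach {K q s}.
Arguments rtraj {K q s}.
Arguments reach_decomp {K q s a b d x}.
Arguments Sreach_stab {K q s}.

Section MapS.
Variables (K K' : fieldType) (f : {rmorphism K -> K'}).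

Lemma map_Sreach q s a b d :
  ((map_mx f (@Sreach K q s a b d)) :=: Sreach (map_mx f a) (map_mx f b) d)%MS.
Proof.
elim: d => [|d IH] /=; first by rewrite map_mx0.
apply: eqmx_trans (map_addsmx _ _ _) _.
apply: adds_eqmx => //; rewrite map_mxM; exact: eqmxMr.
Qed.

End MapS.

Section Closed.
Variable K : closedFieldType.

Lemma stable_eig q (V : 'M[K]_q) (Phi : 'M[K]_q) : V != 0 -> (V *m Phi <= V)%MS ->
  exists theta (w : 'rV[K]_q), [/\ w != 0, (w <= V)%MS & w *m Phi = theta *: w].
Proof.
move=> V0 st.
have : (0 < \rank V)%N by rewrite lt0n mxrank_eq0.
move: (row_base V) (eq_row_base V) (row_base_free V).
case: (\rank V) => // r Vb eqV fr _.
have sub : (Vb *m Phi <= Vb)%MS by rewrite eqV; apply: submx_trans st; rewrite submxMr // eqV.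
set M := Vb *m Phi *m pinvmx Vb.
have HM : M *m Vb = Vb *m Phi by rewrite mulmxKpV.
have [theta Hroot] : exists x, root (char_poly M) x.
  by apply/closed_rootP; rewrite size_char_poly.
have /eigenvalueP [u Hu u0] : eigenvalue M theta by rewrite eigenvalue_root_char.
exists theta, (u *m Vb); split.
- by rewrite mulmx_free_eq0.
- by rewrite -eqV submxMl.
- by rewrite -mulmxA -HM mulmxA Hu scalemxAl.
Qed.

Lemma pbh_full q s (Phi : 'M[K]_q) (Psi : 'M[K]_(q, s)) (S : 'M[K]_q) :
  (Psi^T <= S)%MS -> (S *m Phi^T <= S)%MS ->
  (forall theta (w : 'rV[K]_q), w *m Phi = theta *: w -> w *m Psi = 0 -> w = 0) ->
  \rank S = q.
Proof.
move=> sPsi st pbh.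
apply/eqP; rewrite eqn_leq rank_leq_col /=; rewrite leqNgt; apply/negP => lt.
set Ann := kermx S^T.
have A0 : Ann != 0.
  by rewrite -mxrank_eq0 mxrank_ker mxrank_tr -lt0n subn_gt0.
have AS : Ann *m S^T = 0 by rewrite mulmx_ker.
set M := S *m Phi^T *m pinvmx S.
have HM : M *m S = S *m Phi^T by rewrite mulmxKpV.
have stA : (Ann *m Phi <= Ann)%MS.
  apply/sub_kermxP.
  have e : Phi *m S^T = S^T *m M^T.
    by rewrite -trmx_mul HM trmx_mul trmxK.
  by rewrite -mulmxA e mulmxA AS mul0mx.
have [theta [w [w0 wA Hw]]] := @stable_eig q Ann Phi A0 stA.
apply/negP: w0; rewrite negbK; apply/eqP; apply: (pbh theta) => //.
have wS : w *m S^T = 0 by apply/sub_kermxP.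
have -> : Psi = S^T *m (Psi^T *m pinvmx S)^T.
  by rewrite -trmx_mul mulmxKpV // trmxK.
by rewrite mulmxA wS mul0mx.
Qed.

End Closed.

Lemma traj_formula (R : realType) q s (Phi : 'M[R]_q) (Psi : 'M[R]_(q, s)) X0 U k :
  traj Phi Psi X0 U k = Phi ^+ k *m X0 + (rtraj Phi^T Psi^T (fun j => (U j)^T) k)^T.
Proof.
elim: k => [|k IH] /=; first by rewrite expr0 mul1mx trmx0 addr0.
rewrite IH mulmxDr [X in _ = _ + X]linearD /= !trmx_mul !trmxK exprS -mulmxE mulmxA addrA.
by rewrite mulmxE.
Qed.

Lemma ctrl_of_rank (R : realType) q s (Phi : 'M[R]_q) (Psi : 'M[R]_(q, s)) d :
  \rank (Sreach Phi^T Psi^T d) = q -> ds_controllable Phi Psi.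
Proof.
move=> rk X0.
have full : row_full (Sreach Phi^T Psi^T d) by rewrite /row_full rk.
have [U' HU'] := reach_decomp (submx_full (- (Phi ^+ d *m X0))^T full).
exists d, (fun j => (U' j)^T).
rewrite traj_formula.
have -> : (fun j => ((U' j)^T)^T) = U' by apply: funext => j; rewrite trmxK.
rewrite -HU' (trmxK (- (Phi ^+ d *m X0))). exact: addrN. Qed.

Section Tens.
Variable K : comNzRingType.

Lemma tensmxDr m n p q (A : 'M[K]_(m, n)) (B C : 'M[K]_(p, q)) :
  A *t (B + C) = A *t B + A *t C.
Proof. by apply/matrixP => i j; rewrite !mxE mulrDr. Qed.

Lemma tensmxNr m n p q (A : 'M[K]_(m, n)) (B : 'M[K]_(p, q)) :
  A *t (- B) = - (A *t B).
Proof. by apply/matrixP => i j; rewrite !mxE mulrN. Qed.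

Lemma tensmxZl m n p q c (A : 'M[K]_(m, n)) (B : 'M[K]_(p, q)) :
  (c *: A) *t B = c *: (A *t B).
Proof. by apply/matrixP => i j; rewrite !mxE mulrA. Qed.

Lemma tensmxZr m n p q c (A : 'M[K]_(m, n)) (B : 'M[K]_(p, q)) :
  A *t (c *: B) = c *: (A *t B).
Proof. by apply/matrixP => i j; rewrite !mxE mulrCA. Qed.

Lemma tens11 m n : (1%:M : 'M[K]_m) *t (1%:M : 'M[K]_n) = 1%:M.
Proof.
apply/matrixP => i j.
case: (mxtens_indexP i) => i1 i2; case: (mxtens_indexP j) => j1 j2.
rewrite tensmxE !mxE (can_eq (@mxtens_indexK _ _)) xpair_eqE.
by case: (i1 == j1); case: (i2 == j2); rewrite /= ?mulr1 ?mulr0 ?mul0r.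
Qed.

Lemma sum_delta N n (eta : 'I_N -> 'rV[K]_n) a b :
  (\sum_k (delta_mx 0 k : 'rV[K]_N) *t eta k) (mxtens_index (0, 0)) (mxtens_index (a, b))
  = eta a 0 b.
Proof.
rewrite summxE (bigD1 a) //= big1 => [|k nk]; rewrite tensmxE !mxE.
  by rewrite !eqxx mul1r addr0.
by rewrite eq_sym (negbTE nk) andbF mul0r.
Qed.

End Tens.
Arguments sum_delta {K N n}.

Section Decomp.
Variable K : fieldType.

Lemma idx00 : (mxtens_index ((0 : 'I_1), (0 : 'I_1)) : 'I_1) = 0.
Proof. exact: val_inj. Qed.

Lemma tens_decomp N n (Vm : 'M[K]_N) (w : 'rV[K]_(N * n)) : Vm \in unitmx ->
  exists xi : 'I_N -> 'rV[K]_n, w = \sum_k row k Vm *t xi k.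
Proof.
move=> uV.
set y := w *m (invmx Vm *t 1%:M).
exists (fun k => \row_b y 0 (mxtens_index (k, b))).
have -> : w = y *m (Vm *t 1%:M).
  by rewrite /y -mulmxA tensmx_mul mulVmx // mulmx1 tens11 mulmx1.
have ey : y = \sum_k (delta_mx 0 k : 'rV[K]_N) *t (\row_b y 0 (mxtens_index (k, b))).
  apply/matrixP => i0 j; case: (mxtens_indexP j) => a b.
  rewrite [i0]ord1.
  have := sum_delta (fun k => \row_b0 y 0 (mxtens_index (k, b0))) a b.
  rewrite /= mxE => <-; congr (_ _ _); exact: val_inj.
rewrite {1}ey mulmx_suml; apply: eq_bigr => k _.
by rewrite (@tensmx_mul _ 1 N 1 n N n) mulmx1 -rowE.
Qed.

Lemma tens_uniq N n (Vm : 'M[K]_N) (eta : 'I_N -> 'rV[K]_n) : Vm \in unitmx ->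
  \sum_k row k Vm *t eta k = 0 -> forall k, eta k = 0.
Proof.
move=> uV H a.
have : (\sum_k row k Vm *t eta k) *m (invmx Vm *t 1%:M) = 0 by rewrite H mul0mx.
rewrite mulmx_suml.
under eq_bigr => k _ do rewrite tensmx_mul rowE mulmxK // mulmx1.
move/matrixP => H2; apply/matrixP => i0 b; rewrite [i0]ord1 mxE.
by have := H2 (mxtens_index (0, 0)) (mxtens_index (a, b)); rewrite sum_delta mxE.
Qed.

End Decomp.

Lemma cmxE (R : realType) m n (X : 'M[R]_(m, n)) : cmx X = map_mx (real_complex R) X.
Proof. by []. Qed.

Lemma v0_nz (R : realType) N (W : 'M[R]_N)
  (hWnz : forall i j : 'I_N,
     ((val i == 0%N) && (val j == N.-1)) || (val i == (val j).+1) -> W i j != 0)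
  (hWz : forall i j : 'I_N,
     ~~ (((val i == 0%N) && (val j == N.-1)) || (val i == (val j).+1)) -> W i j = 0)
  (x : 'rV[R[i]]_N) (l : R[i]) :
  x *m cmx W = l *: x -> x != 0 -> forall j0 : 'I_N, val j0 = 0%N -> x 0 j0 != 0.
Proof.
move=> hx x0 j0 vj0; apply: contra x0 => /eqP xj0.
have H : forall t (j : 'I_N), val j = t -> x 0 j = 0.
  elim=> [|t IH] j vj.
    by rewrite (_ : j = j0) //; apply: val_inj; rewrite vj vj0.
  have ltt1 : (t.+1 < N)%N by rewrite -vj ltn_ord.
  have ltt : (t < N)%N by rewrite ltnW.
  pose j' := Ordinal ltt.
  have es : (x *m cmx W) 0 j' = x 0 j * real_complex R (W j j').
    rewrite mxE (bigD1 j) //= big1 ?addr0 ?cmxE ?mxE // => i ni.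
    rewrite mxE hWz ?raddf0 ?mulr0 //.
    apply/negP => /orP [/andP [_ /eqP h] | /eqP h].
      by move: h ltt1 => /= ->; case: (N) => //= k; rewrite ltnn.
    by move/negP: ni; apply; apply/eqP/val_inj; rewrite /= h vj.
  have el : (l *: x) 0 j' = 0 by rewrite mxE (IH j') // mulr0.
  move: es; rewrite hx el => /esym/eqP; rewrite mulf_eq0 => /orP [/eqP // |].
  rewrite fmorph_eq0 (negbTE (hWnz _ _ _)) //.
  by rewrite vj eqxx orbT.
apply/eqP/matrixP => i0 j; rewrite [i0]ord1 mxE; exact: H.
Qed.
Theorem corollary7 (R : realType) (N n m p : nat)
  (hN : (2 <= N)%N) (hn : (0 < n)%N) (hm : (0 < m)%N) (hp : (0 < p)%N)
  (A : 'M[R]_n) (B : 'M[R]_(n, p)) (C : 'M[R]_(m, n)) (H : 'M[R]_(n, m))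
  (h : R) (hh : 0 < h)
  (W : 'M[R]_N)
  (hWnz : forall i j : 'I_N,
     ((val i == 0%N) && (val j == N.-1)) || (val i == (val j).+1) -> W i j != 0)
  (hWz : forall i j : 'I_N,
     ~~ (((val i == 0%N) && (val j == N.-1)) || (val i == (val j).+1)) -> W i j = 0)
  (v : 'I_N -> 'rV[R[i]]_N) (lambda : 'I_N -> R[i])
  (hvind : row_free (\matrix_(k < N) v k))
  (hveig : forall k, v k *m cmx W = lambda k *: v k) :
  let Delta : 'M[R]_N := \matrix_(i, j) ((val i == 0%N) && (val j == 0%N))%:R in
  let Bh : 'M[R]_(n, p) := intexpmx A h *m B in
  let Hh : 'M[R]_n := intexpmx A h *m (H *m C) in
  let Phi_s := (1%:M : 'M[R]_N) *t expmx (h *: A) + W *t Hh in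
  let Psi_s := Delta *t Bh in
  let E := fun k : 'I_N => cmx (expmx (h *: A)) + lambda k *: cmx Hh in
  (forall k : 'I_N, pair_controllable (E k) (cmx Bh)) ->
  (forall (theta : R[i]) (S : {set 'I_N}),
     (1 < #|S|)%N ->
     (forall k, k \in S -> eigenvalue (E k) theta) ->
     forall xi : 'I_N -> 'rV[R[i]]_n,
       (forall k, k \in S -> left_eig theta (E k) (xi k)) ->
       (exists2 k, k \in S & xi k != 0) ->
       (\sum_(k in S) (v k *t xi k)) *m cmx Psi_s != 0) ->
  ds_controllable Phi_s Psi_s.
Proof.
move=> Delta Bh Hh Phi_s Psi_s E h2 h3.
have ePhi : cmx Phi_s = 1%:M *t cmx (expmx (h *: A)) + cmx W *t cmx Hh.
  by rewrite /Phi_s !cmxE map_mxD !map_mxT map_mx1.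
have ePsi : cmx Psi_s = cmx Delta *t cmx Bh.
  by rewrite /Psi_s !cmxE map_mxT.
have pbh : forall theta (w : 'rV[R[i]]_(N * n)),
    w *m cmx Phi_s = theta *: w -> w *m cmx Psi_s = 0 -> w = 0.
  move=> theta w Hw HP.
  have uV : (\matrix_k v k) \in unitmx by rewrite -row_free_unit.
  have [xi exi] := @tens_decomp _ N n _ w uV.
  have ew : w = \sum_k v k *t xi k by rewrite exi; apply: eq_bigr => k _; rewrite rowK.
  have key : forall k, (v k *t xi k) *m cmx Phi_s = v k *t (xi k *m E k).
    move=> k; rewrite ePhi mulmxDr !(@tensmx_mul _ 1 N 1 n N n) mulmx1 hveig.
    by rewrite tensmxZl -tensmxZr -tensmxDr /E mulmxDr -scalemxAr.
  have eig : forall k, xi k *m E k = theta *: xi k.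
    have : \sum_k row k (\matrix_k v k) *t (xi k *m E k - theta *: xi k) = 0.
      under eq_bigr => k _ do rewrite rowK tensmxDr tensmxNr tensmxZr -key.
      by rewrite sumrB -mulmx_suml -scaler_sumr -ew Hw subrr.
    move/(@tens_uniq _ N n _ _ uV) => Hk k; apply/eqP; rewrite -subr_eq0; apply/eqP; exact: Hk.
  have HPs : (\sum_k v k *t xi k) *m (cmx Delta *t cmx Bh) = 0 by rewrite -ew -ePsi.
  set S := [set k | xi k != 0].
  have inS : forall k, (k \in S) = (xi k != 0) by move=> k; rewrite inE.
  have eqS : \sum_k v k *t xi k = \sum_(k in S) v k *t xi k.
    rewrite (bigID (fun k => k \in S)) /= [X in _ + X]big1 ?addr0 // => k.
    by rewrite inS negbK => /eqP ->; exact: tensmx0.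
  have : (#|S| == 0%N) || (#|S| == 1%N) || (1 < #|S|)%N by case: #|S| => [|[|k]].
  case/orP => [/orP [/eqP/cards0_eq S0 | /cards1P [k0 S1]] | S2].
  - rewrite ew big1 // => k _; have : k \notin S by rewrite S0 inE.
    by rewrite inS negbK => /eqP ->; exact: tensmx0.
  - exfalso.
    rewrite eqS S1 big_set1 (@tensmx_mul _ 1 N 1 n N p) in HPs.
    have xk0 : xi k0 != 0 by rewrite -inS S1 set11.
    have xB : xi k0 *m cmx Bh != 0.
      have fr : row_free (row_mx (theta%:M - E k0) (cmx Bh)) by rewrite /row_free h2.
      apply/negP => /eqP xB0.
      have : xi k0 *m row_mx (theta%:M - E k0) (cmx Bh) == 0.
        by rewrite mul_mx_row mulmxBr mul_mx_scalar eig subrr xB0 row_mx0.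
      by rewrite mulmx_free_eq0 // (negbTE xk0).
    have N0 : (0 < N)%N by apply: leq_trans hN.
    pose j0 := Ordinal N0.
    have vk0 : v k0 != 0.
      have : (delta_mx 0 k0 : 'rV[R[i]]_N) *m (\matrix_k v k) != 0.
        rewrite mulmx_free_eq0 //; apply/eqP => /matrixP/(_ 0 k0).
        by rewrite !mxE !eqxx /= => /eqP; rewrite oner_eq0.
      by rewrite -rowE rowK.
    have vD : (v k0 *m cmx Delta) 0 j0 != 0.
      have -> : (v k0 *m cmx Delta) 0 j0 = v k0 0 j0.
        rewrite mxE (bigD1 j0) //= big1 ?addr0.
          by rewrite cmxE !mxE /= rmorph1 mulr1.
        move=> i0 ni; rewrite cmxE !mxE /=.
        have : val i0 != 0%N by apply: contra ni => /eqP e; apply/eqP/val_inj.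
        by move/negbTE => -> /=; rewrite rmorph0 mulr0.
      exact: (@v0_nz R N W hWnz hWz (v k0) (lambda k0) (hveig k0) vk0 j0 erefl).
    have [b Hb] := rV0Pn _ xB.
    move/matrixP: HPs => /(_ (mxtens_index (0, 0)) (mxtens_index (j0, b))).
    rewrite tensmxE => /eqP; rewrite [X in _ == X]mxE mulf_eq0 (negbTE vD) (negbTE Hb).
    by [].
  - have : (\sum_(k in S) v k *t xi k) *m cmx Psi_s != 0.
      apply: h3 => //.
      + by move=> k kS; apply/eigenvalueP; exists (xi k); rewrite ?eig // -inS.
      + by move=> k _; exact: eig k.
      + by case/card_gt0P: (ltnW S2) => k kS; exists k => //; rewrite -inS.
    by rewrite -eqS -ew HP eqxx.
have [d Hd] := Sreach_stab (cmx Phi_s)^T (cmx Psi_s)^T.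
have rkC : \rank (Sreach (cmx Phi_s)^T (cmx Psi_s)^T d) = (N * n)%N.
  apply: (@pbh_full _ _ _ _ _ _ _ _ pbh).
  - apply: submx_trans Hd; exact: addsmxSl.
  - apply: submx_trans Hd; exact: addsmxSr.
apply: (@ctrl_of_rank R _ _ Phi_s Psi_s d).
rewrite -(mxrank_map (real_complex R)) (map_Sreach _ _ (real_complex R)) -!map_trmx.
exact: rkC.
Qed.
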